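(* Let $\mathbf{X}\sim\mathcal{MSP}(\mathbf{0},\boldsymbol{\Sigma}^{\mathrm{row}},\kappa)$ be a $p$-variate $L^2$-continuous process with mean zero on a compact interval $\mathcal{T}=\mathcal{T}_1\cup\dots\cup\mathcal{T}_d$ (pairwise disjoint subintervals), with separable covariance operator $\mathcal{C}=\boldsymbol{\Sigma}^{\mathrm{row}}\mathcal{K}$ and kernel $\mathbf{K}(s,t)=\boldsymbol{\Sigma}^{\mathrm{row}}\kappa(s,t)$. Let $(\lambda_i^{\ker},\xi_i)$, $i=1,\dots,m$, be the $m$ largest eigenpairs of $\mathcal{K}$ (with $\lambda_m^{\ker}>0$), $(\lambda^{\mathrm{row}}_j,\mathbf{v}^{\mathrm{row}}_j)$, $j=1,\dots,p$, the eigenpairs of $\boldsymbol{\Sigma}^{\mathrm{row}}$, $v^{\mathrm{row}}_{j,k}=\mathbf{e}_k'\mathbf{v}^{\mathrm{row}}_j$, and $M=mp$. Then for each $k\in\{1,\dots,p\}$ and $a\in\{1,\dots,d\}$, $$\Theta_{k,\mathcal{T}_a}(\mathbf{X},\mathbf{0};\boldsymbol{\Sigma}^{\mathrm{row}}\kappa,M)=\sum_{i=1}^m\sum_{j=1}^p\frac{1}{\lambda^{\ker}_i\lambda^{\mathrm{row}}_j}\Big(\langle X_k,\xi_i\rangle_{\mathcal{T}_a}v^{\mathrm{row}}_{j,k}\sum_{l=1}^p\langle X_l,\xi_i\rangle_{\mathcal{T}}v^{\mathrm{row}}_{j,l}\Big).$$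
   Context: $\boldsymbol{\Sigma}^{\mathrm{row}}$ is a $p\times p$ symmetric positive definite matrix, $\kappa$ a positive definite kernel, and $\mathcal{K}$ the integral operator with kernel $\kappa$; $\langle f,g\rangle_{\mathcal{T}_a}=\int_{\mathcal{T}_a}fg$, $\langle\mathbf{x},\mathbf{y}\rangle=\sum_j\int_{\mathcal{T}}x_jy_j$. The eigenfunctions of $\mathcal{C}$ are taken as $\xi_i\mathbf{v}^{\mathrm{row}}_j$ with eigenvalues $\lambda^{\ker}_i\lambda^{\mathrm{row}}_j$, and $\mathrm{fMMD}^2(\mathbf{Y},\boldsymbol{\mu};\mathbf{K},M)=\sum_{i,j}(\lambda^{\ker}_i\lambda^{\mathrm{row}}_j)^{-1}\langle\mathbf{Y}-\boldsymbol{\mu},\xi_i\mathbf{v}^{\mathrm{row}}_j\rangle^2$ over these $M=mp$ eigenpairs. For a set $Q\subseteq\{1,\dots,p\}\times\{1,\dots,d\}$, $\hat{\mathbf{X}}^Q$ has $\hat X^Q_j(t)=X_j(t)$ if $t\in\mathcal{T}_b$ with $(j,b)\in Q$ and $\hat X^Q_j(t)=\mu_j(t)$ otherwise (here $\boldsymbol{\mu}=\mathbf{0}$). $\Theta_{k,\mathcal{T}_a}(\mathbf{X},\boldsymbol{\mu};\mathbf{K},M)=\sum_{Q\not\ni(k,a)}\frac{|Q|!(pd-|Q|-1)!}{(pd)!}[v(Q\cup\{(k,a)\})-v(Q)]$ with $v(Q)=\mathrm{fMMD}^2(\hat{\mathbf{X}}^Q,\boldsymbol{\mu};\mathbf{K},M)$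 (Shapley value of cell $(k,a)$). *)

(* Defs.v *)
From HB Require Import structures.
From mathcomp Require Import all_boot all_order all_algebra.
From mathcomp Require Import all_classical all_reals all_analysis.
Set Implicit Arguments. Unset Strict Implicit. Unset Printing Implicit Defensive.
Import Order.TTheory GRing.Theory Num.Theory.
Import numFieldNormedType.Exports.
Local Open Scope classical_set_scope.
Local Open Scope ring_scope.

Section Defs.
Variable R : realType.
Notation mu := (@lebesgue_measure R).

Definition Tset (t0 t1 : R) : set R := [set` `[t0, t1]].

Definition ip (A : set R) (f g : R -> R) : R :=
  Rintegral mu A (fun t => f t * g t).

Definition sq_int (A : set R) (f : R -> R) : Prop :=
  measurable_fun A f /\ mu.-integrable A (fun t => (f t ^+ 2)%:E).

Definition spd p (S : 'M[R]_p) : Prop :=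
  S^T = S /\ forall x : 'cV[R]_p, x != 0 -> 0 < (x^T *m S *m x) 0 0.

Definition pd_kernel (A : set R) (kappa : R -> R -> R) : Prop :=
  (forall s t, kappa s t = kappa t s) /\
  forall (n : nat) (tt : 'I_n -> R) (c : 'I_n -> R),
    (forall i, A (tt i)) ->
    0 <= \sum_(i < n) \sum_(j < n) c i * c j * kappa (tt i) (tt j).

Definition kop (A : set R) (kappa : R -> R -> R) (f : R -> R) : R -> R :=
  fun s => Rintegral mu A (fun t => kappa s t * f t).

(* X^Q : X_j(t) on cells (j,b) in Q, and mu_j(t) = 0 otherwise *)
Definition Xhat p d (Tsub : 'I_d -> interval R) (Q : {set 'I_p * 'I_d})
  (X : 'I_p -> R -> R) : 'I_p -> R -> R :=
  fun j t => if `[< exists b : 'I_d, (j, b) \in Q /\ [set` Tsub b] t >]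
             then X j t else 0.

(* fMMD^2(Y, 0; K, M) over the M = m p eigenpairs xi_i v_j,
   v_j = j-th column of V, so v_{j,l} = V l j *)
Definition fMMD2 m p (T : set R) (lamk : 'I_m -> R) (xi : 'I_m -> R -> R)
  (lamr : 'I_p -> R) (V : 'M[R]_p) (Y : 'I_p -> R -> R) : R :=
  \sum_(i < m) \sum_(j < p)
    (lamk i * lamr j)^-1 * (\sum_(l < p) ip T (Y l) (xi i) * V l j) ^+ 2.

Definition shapley p d (v : {set 'I_p * 'I_d} -> R) (k : 'I_p) (a : 'I_d) : R :=
  \sum_(Q : {set 'I_p * 'I_d} | (k, a) \notin Q)
    ((#|Q| `! * (p * d - #|Q| - 1) `!)%:R / ((p * d) `!)%:R)
      * (v ((k, a) |: Q) - v Q).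

Definition Theta m p d (T : set R) (Tsub : 'I_d -> interval R)
  (lamk : 'I_m -> R) (xi : 'I_m -> R -> R) (lamr : 'I_p -> R) (V : 'M[R]_p)
  (X : 'I_p -> R -> R) (k : 'I_p) (a : 'I_d) : R :=
  shapley (fun Q => fMMD2 T lamk xi lamr V (Xhat Tsub Q X)) k a.

End Defs.

(* Main.v *)
Require Import Defs.
From HB Require Import structures.
From mathcomp Require Import all_boot all_order all_algebra.
From mathcomp Require Import all_classical all_reals all_analysis.
From mathcomp Require Import zify ring lra.
Import Order.TTheory GRing.Theory Num.Theory.
Import numFieldNormedType.Exports.
Local Open Scope classical_set_scope.
Local Open Scope ring_scope.

Set Implicit Arguments. Unset Strict Implicit. Unset Printing Implicit Defensive.

Section Comb.
Variable R : numFieldType.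
Variable I : finType.

Definition w (n s : nat) : R := ((s`! * (n - s - 1)`!)%:R / (n`!)%:R).

Lemma sum_sub (A0 : {set I}) (F : nat -> R) :
  \sum_(Q : {set I} | Q \subset A0) F #|Q| = \sum_(s < #|A0|.+1) 'C(#|A0|, s)%:R * F s.
Proof.
rewrite (partition_big (fun Q : {set I} => inord #|Q| : 'I_(#|A0|.+1)) xpredT) //=.
apply: eq_bigr => s _.
rewrite (eq_bigr (fun _ => F s)); last first.
  by move=> Q /andP[sQ /eqP <-]; rewrite inordK // ltnS subset_leq_card.
rewrite sumr_const -cards_draws mulr_natl; congr (_ *+ _); apply: eq_card => Q.
rewrite !inE -topredE /=; case sQ: (Q \subset A0) => //=.
have hQ : (#|Q| < #|A0|.+1)%N by rewrite ltnS subset_leq_card.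
apply/eqP/eqP => [H|H]; first by rewrite -H inordK.
by apply: val_inj; rewrite /= inordK.
Qed.

Lemma W1 (A0 : {set I}) n : n = #|A0|.+1 ->
  \sum_(Q : {set I} | Q \subset A0) w n #|Q| = 1.
Proof.
move=> ->; rewrite sum_sub; set N := #|A0|.
rewrite (eq_bigr (fun _ => (N`!)%:R / ((N.+1)`!)%:R)); last first.
  move=> s _; rewrite /w mulrA -natrM.
  have -> : (N.+1 - s - 1 = N - s)%N by lia.
  by rewrite bin_fact // -ltnS.
rewrite sumr_const card_ord -[_ *+ _]mulr_natl mulrA -natrM -factS divff //;
  by rewrite pnatr_eq0 -lt0n fact_gt0.
Qed.

Lemma tri K : (2 * \sum_(s < K) (K - s) = K * K.+1)%N.
Proof.
elim: K => [|K IH]; first by rewrite big_ord0.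
rewrite big_ord_recl /= (eq_bigr (fun s : 'I_K => K - s)%N); last first.
  by move=> s _; rewrite /bump /=; lia.
rewrite mulnDr IH; lia.
Qed.

Lemma W2 (A0 : {set I}) n : n = #|A0|.+2 ->
  \sum_(Q : {set I} | Q \subset A0) w n #|Q| = 2^-1.
Proof.
move=> ->; rewrite sum_sub; set N := #|A0|.
rewrite (eq_bigr (fun s : 'I_N.+1 => (N`! * (N.+1 - s))%:R / ((N.+2)`!)%:R)); last first.
  move=> s _; rewrite /w mulrA -natrM.
  have hs : (s <= N)%N by rewrite -ltnS.
  have -> : (N.+2 - s - 1 = (N - s).+1)%N by lia.
  rewrite factS -(bin_fact hs); congr (_%:R / _).
  have -> : (N.+1 - s = (N - s).+1)%N by lia.
  ring.
rewrite -mulr_suml -natr_sum -big_distrr /=.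
have h2 : (2 * \sum_(s < N.+1) (N.+1 - s) = N.+1 * N.+2)%N by rewrite tri.
have hf : ((N.+2)`! = N.+2 * (N.+1 * N`!))%N by rewrite !factS.
have h20 : (2 : R) != 0 by rewrite pnatr_eq0.
have hS : (\sum_(s < N.+1) (N.+1 - s))%:R = (N.+1 * N.+2)%:R / 2 :> R.
  by rewrite -h2 natrM mulrC mulKf.
have hN : (N`!)%:R != 0 :> R by rewrite pnatr_eq0 -lt0n fact_gt0.
rewrite natrM hS hf !natrM; field.
by rewrite hN /= !(addrC _ N%:R) natr1 -!natrD !pnatr_eq0 addn2.
Qed.


Lemma shap_quad (u : I -> R) e n : n = #|I| ->
  \sum_(Q : {set I} | e \notin Q)
     w n #|Q| * ((\sum_(c in e |: Q) u c) ^+ 2 - (\sum_(c in Q) u c) ^+ 2)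
  = u e * \sum_c u c.
Proof.
move=> hn.
have h20 : (2 : R) != 0 by rewrite pnatr_eq0.
have cI : (0 < #|I|)%N by apply/card_gt0P; exists e.
have A : \sum_(Q : {set I} | e \notin Q) w n #|Q| = 1.
  rewrite -(@W1 (~: [set e]) n); last by rewrite cardsC1 prednK.
  by apply: eq_bigl => Q; rewrite finset.subsetC finset.sub1set inE.
have B : forall c, c != e ->
    \sum_(Q : {set I} | e \notin Q) w n #|Q| * (c \in Q)%:R = 2^-1.
  move=> c ce.
  transitivity (\sum_(Q : {set I} | e \notin Q) w n #|Q|
               - \sum_(Q : {set I} | Q \subset ~: [set e; c]) w n #|Q|).
    rewrite [X in _ - X](eq_bigl (fun Q : {set I} => (e \notin Q) && (c \notin Q))); last first.
      by move=> Q; rewrite finset.subsetC finset.subUset !finset.sub1set !inE.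
    rewrite big_mkcondr /= -sumrB; apply: eq_bigr => Q _.
    by case: (c \in Q) => /=; rewrite ?mulr1 ?mulr0 ?subr0 ?subrr.
  rewrite A (@W2 (~: [set e; c]) n); first by field.
  have := cardsC [set e; c]; rewrite cards2 eq_sym ce hn; lia.
rewrite (eq_bigr (fun Q : {set I} => u e * u e * w n #|Q| + \sum_(c | c != e)
           (2 * (u e * u c)) * (w n #|Q| * (c \in Q)%:R))); last first.
  move=> Q eQ; rewrite big_setU1 //=.
  have SQ : \sum_(c in Q) u c = \sum_(c | c != e) u c * (c \in Q)%:R.
    rewrite big_mkcond /= (bigD1 e) //= (negbTE eQ) add0r; apply: eq_bigr => c _.
    by case: (c \in Q); rewrite ?mulr1 ?mulr0.
  have -> : \sum_(c | c != e) (2 * (u e * u c)) * (w n #|Q| * (c \in Q)%:R) =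
     (2 * u e) * w n #|Q| * \sum_(c | c != e) u c * (c \in Q)%:R.
    by rewrite big_distrr /=; apply: eq_bigr => c _; ring.
  rewrite SQ; ring.
rewrite big_split /= -big_distrr /= A exchange_big /=.
rewrite (eq_bigr (fun c => (2 * (u e * u c)) * 2^-1)); last first.
  by move=> c ce; rewrite -big_distrr /= B.
rewrite [in RHS](bigD1 e) //= mulrDr big_distrr /= mulr1; congr (_ + _).
by apply: eq_bigr => c _; field.
Qed.

End Comb.

Section Ana.
Variable R : realType.
Notation mu := (@lebesgue_measure R).
Variables (d : nat) (Tsub : 'I_d -> interval R) (Ti : interval R).
Let T := [set` Ti].
Hypothesis subT : forall b, [set` Tsub b] `<=` T.
Hypothesis disj : forall a b : 'I_d, a != b -> [set` Tsub a] `&` [set` Tsub b] = set0.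
Variable P : pred 'I_d.

Definition U (s : seq 'I_d) := \big[setU/set0]_(b <- s | P b) [set` Tsub b].

Lemma U_meas s : measurable (U s).
Proof.
elim: s => [|h s IH]; first by rewrite /U big_nil.
rewrite /U big_cons -/(U s); case: ifP => // _; exact: measurableU.
Qed.

Lemma U_sub s : U s `<=` T.
Proof.
elim: s => [|h s IH]; first by rewrite /U big_nil.
rewrite /U big_cons -/(U s); case: ifP => // _ t [|]; [exact: subT | exact: IH].
Qed.

Lemma U_mem s t : U s t <-> exists b, [/\ b \in s, P b & [set` Tsub b] t].
Proof.
elim: s => [|h s IH].
  by rewrite /U big_nil; split => // -[b []].
rewrite /U big_cons -/(U s); split.
  case: ifP => Ph.
    case => [th|/IH [b [bs Pb tb]]]; first by exists h; rewrite mem_head.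
    by exists b; rewrite in_cons bs orbT.
  by move=> /IH [b [bs Pb tb]]; exists b; rewrite in_cons bs orbT.
move=> [b []]; rewrite in_cons => /orP[/eqP ->|bs] Pb tb.
  by rewrite Pb; left.
have Ut : U s t by apply/IH; exists b.
by case: ifP => _; [right|].
Qed.

Lemma U_disj h s : h \notin s -> [set` Tsub h] `&` U s = set0.
Proof.
move=> hs; apply/seteqP; split => t //= [th /U_mem [b [bs Pb tb]]].
have hb : h != b by apply: contraNneq hs => ->.
have : ([set` Tsub h] `&` [set` Tsub b]) t by []. 
by rewrite disj.
Qed.

Lemma U_int (F : R -> R) : mu.-integrable T (EFin \o F) -> forall s, uniq s ->
  Rintegral mu (U s) F = \sum_(b <- s | P b) Rintegral mu [set` Tsub b] F.
Proof.
move=> iF; elim => [|h s IH]; first by rewrite /U !big_nil Rintegral_set0.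
move=> /= /andP[hs us]; rewrite /U !big_cons -/(U s); case: ifP => Ph; last exact: IH.
rewrite Rintegral_setU; first by rewrite IH.
- by apply: measurable_itv.
- by apply: U_meas.
- apply: integrableS iF.
  + exact: (measurable_itv Ti).
  + by apply: measurableU; [apply: measurable_itv | apply: U_meas].
  + by move=> t [|]; [exact: subT | exact: U_sub].
- by rewrite disj_set2E; apply/eqP; exact: U_disj.
Qed.

Lemma sq_int_prod (f g : R -> R) :
  measurable_fun T f -> mu.-integrable T (fun t => (f t ^+ 2)%:E) ->
  measurable_fun T g -> mu.-integrable T (fun t => (g t ^+ 2)%:E) ->
  mu.-integrable T (EFin \o (fun t => f t * g t)).
Proof.
move=> mf if2 mg ig2.
apply: (le_integrable _ _ _ (integrableD _ if2 ig2)); try (by rewrite /T; apply: measurable_itv).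
  by apply/measurable_realfun.measurable_EFinP; exact: measurable_realfun.measurable_funM.
move=> t Tt /=; rewrite lee_fin.
rewrite (ger0_norm (addr_ge0 (sqr_ge0 _) (sqr_ge0 _))).
rewrite ler_norml; apply/andP; split; nra.
Qed.

Lemma ip_split (F : R -> R) (Pf : R -> Prop) :
  mu.-integrable T (EFin \o F) ->
  (forall t, T t -> Pf t <-> exists b, P b /\ [set` Tsub b] t) ->
  Rintegral mu T (fun t => if `[< Pf t >] then F t else 0) =
  \sum_(b | P b) Rintegral mu [set` Tsub b] F.
Proof.
move=> iF hP.
rewrite -(U_int iF (index_enum_uniq _)).
rewrite -(setIidr (@U_sub (index_enum 'I_d))) Rintegral_mkcondr.
apply: eq_Rintegral => t /set_mem Tt; rewrite /restrict.
case: asboolP => [/(hP _ Tt) [b [Pb tb]]|nP].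
  by rewrite ifT //; apply/mem_set/U_mem; exists b; rewrite mem_index_enum.
rewrite ifF //; apply/negbTE/negP => /set_mem /U_mem [b [_ Pb tb]].
by apply: nP; apply/(hP _ Tt); exists b.
Qed.

End Ana.

Unset Implicit Arguments.

Theorem corollary2 (R : realType) (dO : measure_display) (Omega : measurableType dO)
  (P : probability Omega R)
  (p d m : nat) (t0 t1 : R) (Tsub : 'I_d -> interval R)
  (Sigma : 'M[R]_p) (kappa : R -> R -> R)
  (X : Omega -> 'I_p -> R -> R)
  (lamk : 'I_m -> R) (xi : 'I_m -> R -> R)
  (lamr : 'I_p -> R) (V : 'M[R]_p) :
  (* T = [t0,t1] is the disjoint union of the subintervals T_1..T_d *)
  t0 <= t1 ->
  (forall a b : 'I_d, a != b -> [set` Tsub a] `&` [set` Tsub b] = set0) ->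
  \bigcup_(a in [set: 'I_d]) [set` Tsub a] = Tset t0 t1 ->
  (* row covariance and kernel *)
  spd Sigma ->
  pd_kernel (Tset t0 t1) kappa ->
  (* X ~ MSP(0, Sigma, kappa): mean zero, covariance Sigma_{kl} kappa(s,t) *)
  (forall k t, measurable_fun setT (fun w => X w k t)) ->
  (forall k t, P.-integrable setT (fun w => (X w k t ^+ 2)%:E)) ->
  (forall k t, (Tset t0 t1) t -> (\int[P]_w (X w k t)%:E = 0)%E) ->
  (forall k l s t, (Tset t0 t1) s -> (Tset t0 t1) t ->
     (\int[P]_w (X w k s * X w l t)%:E = (Sigma k l * kappa s t)%:E)%E) ->
  (* L^2-continuity *)
  (forall k t, (Tset t0 t1) t -> forall e : R, 0 < e -> exists2 delta : R, 0 < delta &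
     forall s, (Tset t0 t1) s -> `|s - t| < delta ->
       (\int[P]_w ((X w k s - X w k t) ^+ 2)%:E < e%:E)%E) ->
  (* sample paths are square integrable on T *)
  (forall w k, sq_int (Tset t0 t1) (X w k)) ->
  (* (lamk i, xi i), i < m: the m largest eigenpairs of K, lamk_m > 0 *)
  (forall i, sq_int (Tset t0 t1) (xi i)) ->
  (forall i j, ip (Tset t0 t1) (xi i) (xi j) = (i == j)%:R) ->
  (forall i s, (Tset t0 t1) s -> kop (Tset t0 t1) kappa (xi i) s = lamk i * xi i s) ->
  (forall i j : 'I_m, (i <= j)%N -> lamk j <= lamk i) ->
  (forall i, 0 < lamk i) ->
  (forall (mu : R) (f : R -> R), sq_int (Tset t0 t1) f ->
     0 < ip (Tset t0 t1) f f ->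
     (forall i, ip (Tset t0 t1) f (xi i) = 0) ->
     (forall s, (Tset t0 t1) s -> kop (Tset t0 t1) kappa f s = mu * f s) ->
     forall i, mu <= lamk i) ->
  (* (lamr j, v_j = col j V): orthonormal eigenpairs of Sigma *)
  V^T *m V = 1%:M ->
  (forall j, Sigma *m col j V = lamr j *: col j V) ->
  forall (w : Omega) (k : 'I_p) (a : 'I_d),
    Theta (Tset t0 t1) Tsub lamk xi lamr V (X w) k a =
    \sum_(i < m) \sum_(j < p) (lamk i * lamr j)^-1 *
      (ip [set` Tsub a] (X w k) (xi i) * V k j *
        \sum_(l < p) ip (Tset t0 t1) (X w l) (xi i) * V l j).
Proof.
move=> hle hdisj hU hS hK hXm hXi hX0 hcov hcont hXsq hxisq hortho heig hmono hpos hmax hV hSig w k a.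
set Y := X w.
have subT : forall b, [set` Tsub b] `<=` Tset t0 t1.
  by move=> b t tb; rewrite -hU; exists b.
have intY : forall l i, (@lebesgue_measure R).-integrable (Tset t0 t1)
    (EFin \o (fun t => Y l t * xi i t)).
  move=> l i; have [m1 i1] := hXsq w l; have [m2 i2] := hxisq i.
  exact: sq_int_prod.
have key : forall (Q : {set 'I_p * 'I_d}) l i,
    ip (Tset t0 t1) (Xhat Tsub Q Y l) (xi i) =
    \sum_(b | (l, b) \in Q) ip [set` Tsub b] (Y l) (xi i).
  move=> Q l i; rewrite /ip /Xhat.
  transitivity (Rintegral (@lebesgue_measure R) (Tset t0 t1) (fun t => if `[< exists b, (l, b) \in Q /\ [set` Tsub b] t >]
      then Y l t * xi i t else 0)).
    by apply: eq_Rintegral => t _; case: ifP; rewrite ?mul0r.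
  apply: (ip_split (Ti := `[t0, t1]) subT hdisj (P := fun b => (l, b) \in Q)) => //.
have tot : forall l i, ip (Tset t0 t1) (Y l) (xi i) =
    \sum_b ip [set` Tsub b] (Y l) (xi i).
  move=> l i; have := key [set: 'I_p * 'I_d]%SET l i.
  rewrite (eq_bigl xpredT) => [<-|b]; last by rewrite finset.in_setT.
  rewrite /ip; apply: eq_Rintegral => t /set_mem Tt; rewrite /Xhat.
  case: asboolP => // nE; exfalso; apply: nE.
  by move: Tt; rewrite -hU => -[b _ tb]; exists b; rewrite finset.in_setT.
pose u i j (x : 'I_p * 'I_d) := ip [set` Tsub x.2] (Y x.1) (xi i) * V x.1 j.
have hv : forall Q, fMMD2 (Tset t0 t1) lamk xi lamr V (Xhat Tsub Q Y) =
    \sum_i \sum_j (lamk i * lamr j)^-1 * (\sum_(x in Q) u i j x) ^+ 2.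
  move=> Q; rewrite /fMMD2; apply: eq_bigr => i _; apply: eq_bigr => j _.
  congr (_ * _ ^+ 2).
  under eq_bigr do rewrite key big_distrl /=.
  rewrite pair_big_dep /=; apply: eq_bigl => -[l b] //.
rewrite /Theta /shapley.
rewrite (eq_bigr (fun Q : {set 'I_p * 'I_d} => \sum_i \sum_j (lamk i * lamr j)^-1 *
   (((#|Q| `! * (p * d - #|Q| - 1) `!)%:R / ((p * d) `!)%:R) *
    ((\sum_(x in (k, a) |: Q) u i j x) ^+ 2 - (\sum_(x in Q) u i j x) ^+ 2)))); last first.
  move=> Q _; rewrite !hv -sumrB big_distrr; apply: eq_bigr => i _ /=.
  rewrite -sumrB big_distrr; apply: eq_bigr => j _ /=; ring.
rewrite exchange_big; apply: eq_bigr => i _; rewrite exchange_big; apply: eq_bigr => j _ /=.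
rewrite -big_distrr /=.
rewrite (@shap_quad R _ (u i j) (k, a) (p * d)); last by rewrite card_prod !card_ord.
congr (_ * (_ * _)).
transitivity (\sum_l \sum_b u i j (l, b)).
  by rewrite pair_big; apply: eq_bigr => -[].
apply: eq_bigr => l _; rewrite tot big_distrl.
by apply: eq_bigr.
Qed.
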